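(* If $M$ is an irreducible finite-dimensional graded ${}^\theta\mathbf R_m$-module, then for every sequence $\mathbf i$ one has ${\rm gdim}(1_{\mathbf i}M)\in v\,\mathbb Z[v^2,v^{-2}]\cup\mathbb Z[v^2,v^{-2}]$.
   Context: Let $\mathbf k$ be an algebraically closed field of characteristic $0$. Fix $p,q\in\mathbf k^\times$ with $p\ne\pm1$, and $I\subset\mathbf k^\times$ with $1,-1\notin I$, stable under $z\mapsto p^{\pm2}z$ and $z\mapsto z^{-1}$. Let $h_{i,j}=1$ if $i=p^2j$ and $0$ otherwise, $i\cdot j=-h_{i,j}-h_{j,i}$ ($i\ne j$), $i\cdot i=2$, $\theta(i)=i^{-1}$, $\lambda_i=1$ if $i\in\{q,-q\}$ and $0$ otherwise, $Q_{i,j}(u,v)=(-1)^{h_{i,j}}(u-v)^{-i\cdot j}$ ($i\ne j$), $Q_{i,i}=0$. For $\nu\in\mathbb NI$ with $\nu_{\theta(i)}=\nu_i$, $\sum\nu_i=2m$, ${}^\theta I^\nu$ is the set of $\mathbf i=(i_{1-m},\dots,i_m)\in I^{2m}$ with $i_{1-l}=\theta(i_l)$ and $\#\{l:i_l=i\}=\nu_i$. $W_m=\mathfrak S_m\ltimes(\mathbb Z/2)^m$ acts on $\{1-m,\dots,m\}$ by permutations commuting with $l\mapsto1-l$ ($\varepsilon_l$ exchanges $l,1-l$; $s_k$ the transposition of $k,k+1$) and on sequences by $(w\mathbf i)_l=i_{w^{-1}(l)}$. The graded algebra ${}^\theta\mathbf R_{\lambda,\nu}$ ($m\ge1$) is generated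 by $1_{\mathbf i}$, $\varkappa_l$ ($1\le l\le m$), $\sigma_k$ ($1\le k\le m-1$), $\pi_1$, with $1=\sum1_{\mathbf i}$, $\varkappa_{1-l}:=-\varkappa_l$, and relations: $1_{\mathbf i}1_{\mathbf i'}=\delta_{\mathbf i,\mathbf i'}1_{\mathbf i}$, $\sigma_k1_{\mathbf i}=1_{s_k\mathbf i}\sigma_k$, $\varkappa_l1_{\mathbf i}=1_{\mathbf i}\varkappa_l$, $\pi_11_{\mathbf i}=1_{\varepsilon_1\mathbf i}\pi_1$; $\varkappa$'s commute, $\pi_1\varkappa_l=\varkappa_{\varepsilon_1(l)}\pi_1$; $\sigma_k^21_{\mathbf i}=Q_{i_k,i_{k+1}}(\varkappa_{k+1},\varkappa_k)1_{\mathbf i}$, $\pi_1^21_{\mathbf i}=\varkappa_0^{\lambda_{i_0}}\varkappa_1^{\lambda_{i_1}}1_{\mathbf i}$; $\sigma_k\sigma_{k'}=\sigma_{k'}\sigma_k$ ($|k-k'|\ne1$), $\pi_1\sigma_k=\sigma_k\pi_1$ ($k\ne1$); $(\sigma_1\pi_1)^21_{\mathbf i}=(\pi_1\sigma_1)^21_{\mathbf i}+\delta_{i_0,i_2}(-1)^{\lambda_{i_2}}\frac{\varkappa_0^{\lambda_{i_1}+\lambda_{i_2}}-\varkappa_2^{\lambda_{i_1}+\lambda_{i_2}}}{\varkappa_0-\varkappa_2}\sigma_11_{\mathbf i}$; $(\sigma_{k+1}\sigma_k\sigma_{k+1}-\sigma_k\sigma_{k+1}\sigma_k)1_{\mathbf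 i}=\delta_{i_k,i_{k+2}}\frac{Q_{i_k,i_{k+1}}(\varkappa_{k+1},\varkappa_k)-Q_{i_k,i_{k+1}}(\varkappa_{k+1},\varkappa_{k+2})}{\varkappa_k-\varkappa_{k+2}}1_{\mathbf i}$; $(\sigma_k\varkappa_l-\varkappa_{s_k(l)}\sigma_k)1_{\mathbf i}$ is $-1_{\mathbf i}$ if $l=k$, $i_k=i_{k+1}$, is $1_{\mathbf i}$ if $l=k+1$, $i_k=i_{k+1}$, and $0$ otherwise. Grading: $\deg1_{\mathbf i}=0$, $\deg\varkappa_l=2$, $\deg(\pi_11_{\mathbf i})=\lambda_{i_0}+\lambda_{i_1}$, $\deg(\sigma_k1_{\mathbf i})=-i_k\cdot i_{k+1}$. ${}^\theta\mathbf R_m=\bigoplus_{\nu:\sum\nu_i=2m}{}^\theta\mathbf R_{\lambda,\nu}$, ${}^\theta\mathbf R_0=\mathbf k$. For a graded vector space $N$, ${\rm gdim}\,N=\sum_dv^d\dim N_d$. *)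

(* Defs.v *)
From HB Require Import structures.
From mathcomp Require Import all_boot all_order all_algebra.
Set Implicit Arguments. Unset Strict Implicit. Unset Printing Implicit Defensive.
Import Order.TTheory GRing.Theory Num.Theory.
Local Open Scope ring_scope.

(* Finite-dimensional graded modules over the algebra  theta R_m, encoded    *)
(* concretely:                                                *)
(*  - M = k^n (column vectors) with a homogeneous basis e_0..e_{n-1}, the    *)
(*    basis vector e_a having degree  deg a : int;                           *)
(*  - every generator acts by an n x n matrix (column convention, so the     *)
(*    product  x y  of the algebra acts by  X *m Y);                         *)
(*  - a theta-sequence i = (i_{1-m},...,i_m) with i_{1-l} = i_l^{-1} is      *)
(*    encoded by its right half  s = [:: i_1; ...; i_m] : seq k;            *)
(*  - E s  = action of 1_i,  X l = action of kappa_l (1 <= l <= m),          *)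
(*    S k  = action of sigma_k (1 <= k <= m-1),  P = action of pi_1.         *)

Section ThetaR.
Variable K : fieldType.
Variables (p q : K) (I : pred K) (m n : nat) (deg : 'I_n -> int).

Definition valid_seq (s : seq K) : bool := (size s == m) && all I s.

(* i_l for l in {1-m, ..., m} *)
Definition ival (s : seq K) (l : int) : K :=
  if (0 < l) then nth 0 s `|l - 1|%N else (nth 0 s `|l|%N)^-1.

(* s_k acting on sequences: exchange i_k and i_{k+1} (1 <= k <= m-1) *)
Definition swap_seq (s : seq K) (k : nat) : seq K :=
  mkseq (fun j => if j == k.-1 then nth 0 s k
                  else if j == k then nth 0 s k.-1 else nth 0 s j) (size s).

(* epsilon_1 acting on sequences: exchange i_0 and i_1 *)
Definition eps1_seq (s : seq K) : seq K :=
  mkseq (fun j => if j == 0%N then (nth 0 s 0)^-1 else nth 0 s j) (size s).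

Definition hh (a b : K) : nat := (a == p ^+ 2 * b).
Definition lam (a : K) : nat := (a == q) || (a == - q).
Definition mdot (a b : K) : int :=
  if a == b then (-2)%R else (hh a b + hh b a)%:Z.

(* (A^N - B^N)/(A - B) = sum_{t<N} A^t B^(N-1-t), for commuting A, B *)
Definition dd (N : nat) (A B : 'M[K]_n) : 'M[K]_n :=
  \sum_(t < N) A ^+ t *m B ^+ (N.-1 - t).

Definition Qm (a b : K) (U V : 'M[K]_n) : 'M[K]_n :=
  if a == b then 0 else (-1) ^+ hh a b *: (U - V) ^+ (hh a b + hh b a).

(* (Q_{a,b}(U,V) - Q_{a,b}(U,W)) / (V - W), for commuting U, V, W *)
Definition DQm (a b : K) (U V W : 'M[K]_n) : 'M[K]_n :=
  if a == b then 0
  else - ((-1) ^+ hh a b *: dd (hh a b + hh b a) (U - V) (U - W)).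

Definition homog (A : 'M[K]_n) (d : int) : Prop :=
  forall a b : 'I_n, A a b != 0 -> deg a = deg b + d.

Variables (E : seq K -> 'M[K]_n) (X S : nat -> 'M[K]_n) (P : 'M[K]_n).

(* kappa_l for all l in {1-m,...,m}, with kappa_{1-l} = - kappa_l *)
Definition kap (l : int) : 'M[K]_n :=
  if (0 < l) then X `|l| else - X `|1 - l|.

Definition eps1_int (l : int) : int :=
  if l == 1 then 0 else if l == 0 then 1 else l.

Definition sk_nat (k l : nat) : nat :=
  if l == k then k.+1 else if l == k.+1 then k else l.

Definition is_thetaR_gmod : Prop :=
  (forall i i', valid_seq i -> valid_seq i' ->
     E i *m E i' = if i == i' then E i else 0)
  (* 1 = sum 1_i  (finitely many 1_i act nontrivially on M) *)
  /\ (exists Sq : seq (seq K), all valid_seq Sq /\ uniq Sq /\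
        \sum_(i <- Sq) E i = 1%:M /\
        (forall i, valid_seq i -> i \notin Sq -> E i = 0))
  /\ (forall i k, valid_seq i -> (1 <= k < m)%N ->
        S k *m E i = E (swap_seq i k) *m S k)
  /\ (forall i l, valid_seq i -> (1 <= l <= m)%N -> X l *m E i = E i *m X l)
  /\ (forall i, valid_seq i -> (1 <= m)%N -> P *m E i = E (eps1_seq i) *m P)
  /\ (forall l l', (1 <= l <= m)%N -> (1 <= l' <= m)%N ->
        X l *m X l' = X l' *m X l)
  /\ (forall l : nat, (1 <= m)%N -> (1 <= l <= m)%N ->
        P *m kap l = kap (eps1_int l) *m P)
  /\ (forall i k, valid_seq i -> (1 <= k < m)%N ->
        S k ^+ 2 *m E i =
        Qm (ival i k) (ival i k.+1) (kap k.+1) (kap k) *m E i)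
  /\ (forall i, valid_seq i -> (1 <= m)%N ->
        P ^+ 2 *m E i =
        kap 0 ^+ lam (ival i 0) *m kap 1 ^+ lam (ival i 1) *m E i)
  /\ (forall k k', (1 <= k < m)%N -> (1 <= k' < m)%N ->
        k' != k.+1 -> k != k'.+1 -> S k *m S k' = S k' *m S k)
  /\ (forall k, (2 <= k < m)%N -> P *m S k = S k *m P)
  /\ (forall i, valid_seq i -> (2 <= m)%N ->
        (S 1 *m P) ^+ 2 *m E i =
        (P *m S 1) ^+ 2 *m E i +
        (if ival i 0 == ival i 2 then
           (-1) ^+ lam (ival i 2) *:
             (dd (lam (ival i 1) + lam (ival i 2)) (kap 0) (kap 2)
                *m S 1 *m E i)
         else 0))
  /\ (forall i k, valid_seq i -> (1 <= k)%N -> (k.+2 <= m)%N ->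
        (S k.+1 *m S k *m S k.+1 - S k *m S k.+1 *m S k) *m E i =
        (if ival i k == ival i k.+2 then
           DQm (ival i k) (ival i k.+1) (kap k.+1) (kap k) (kap k.+2) *m E i
         else 0))
  /\ (forall i k l, valid_seq i -> (1 <= k < m)%N -> (1 <= l <= m)%N ->
        (S k *m X l - X (sk_nat k l) *m S k) *m E i =
        (if ival i k == ival i k.+1 then
           (if l == k then - E i else if l == k.+1 then E i else 0)
         else 0))
  /\ (forall i, valid_seq i -> homog (E i) 0)
  /\ (forall l, (1 <= l <= m)%N -> homog (X l) 2)
  /\ (forall i k, valid_seq i -> (1 <= k < m)%N ->
        homog (S k *m E i) (mdot (ival i k) (ival i k.+1)))
  /\ (forall i, valid_seq i -> (1 <= m)%N ->
        homog (P *m E i) (lam (ival i 0) + lam (ival i 1))%:Z).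

(* Subspaces of M = k^n are given as row spaces of W^T-style matrices:      *)
(* the row space of W : 'M_n is the subspace {w^T}.  The column vector v    *)
(* lies in it iff v^T is in the row space of W.                             *)

(* degree-d component M_d, as a row space *)
Definition Dmx (d : int) : 'M[K]_n := diag_mx (\row_a ((deg a == d)%:R)).

Definition graded_subspace (W : 'M[K]_n) : bool :=
  (W <= \sum_(a < n) (W :&: Dmx (deg a)))%MS.

Definition stab (W A : 'M[K]_n) : bool := (W *m A^T <= W)%MS.

Definition irreducible_gmod : Prop :=
  (0 < n)%N /\
  forall W : 'M[K]_n, graded_subspace W ->
    (forall i, valid_seq i -> stab W (E i)) ->
    (forall l, (1 <= l <= m)%N -> stab W (X l)) ->
    (forall k, (1 <= k < m)%N -> stab W (S k)) ->
    ((1 <= m)%N -> stab W P) ->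
    (W == (0 : 'M[K]_n))%MS || row_full W.

End ThetaR.

(* graded dimension of the image of a degree-0 idempotent-like operator A:  *)
(* coefficient of v^d in gdim(A M) = dim (A M)_d                             *)
Definition gdim_coef (K : fieldType) (n : nat) (deg : 'I_n -> int)
  (A : 'M[K]_n) (d : int) : nat :=
  \rank (A^T :&: @Dmx K n deg d)%MS.

(* f (as coefficients of a Laurent polynomial in v) lies in Z[v^2,v^-2] *)
Definition in_Zv2 (f : int -> nat) : Prop :=
  forall d : int, ~~ (2 %| d)%Z -> f d = 0%N.
(* f lies in v Z[v^2,v^-2] *)
Definition in_vZv2 (f : int -> nat) : Prop :=
  forall d : int, (2 %| d)%Z -> f d = 0%N.

Definition theta_params (K : closedFieldType) (p q : K) (I : pred K) : Prop :=
  [pchar K] =i pred0 /\ p != 0 /\ q != 0 /\ p != 1 /\ p != -1 /\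
  (forall z, I z -> z != 0) /\ ~~ I 1 /\ ~~ I (-1) /\
  (forall z, I z -> I (p ^+ 2 * z) /\ I (p ^- 2 * z) /\ I z^-1).

(* Main.v *)
Require Import Defs.
From HB Require Import structures.
From mathcomp Require Import all_boot all_order all_algebra zify ring.
Set Implicit Arguments. Unset Strict Implicit. Unset Printing Implicit Defensive.
Import Order.TTheory GRing.Theory Num.Theory.
Local Open Scope ring_scope.

Section Comb.
Variables (K : fieldType) (p q : K).

Definition Gf (x y : K) : nat := (hh p x y + hh p x^-1 y)%N.
Fixpoint ee (s : seq K) : nat :=
  if s is x :: s' then (lam q x + \sum_(y <- s') Gf x y + ee s')%N else 0%N.

Lemma ee_swap (u w : seq K) (x y : K) :
  (ee (u ++ y :: x :: w) + Gf x y = ee (u ++ x :: y :: w) + Gf y x)%N.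
Proof.
elim: u => [|z u IH] /=.
  rewrite !big_cons; lia.
rewrite !big_cat !big_cons /=; lia.
Qed.

Lemma swap_gen (u w : seq K) (x y : K) :
  swap_seq (u ++ x :: y :: w) (size u).+1 = u ++ y :: x :: w.
Proof.
apply: (@eq_from_nth _ 0); first by rewrite /swap_seq size_mkseq !size_cat.
rewrite /swap_seq size_mkseq => j lt_j.
rewrite nth_mkseq //= !nth_cat.
case: (ltngtP j (size u)) => [lt|gt|eq]; last first.
- subst j; by rewrite ltnNge leqnSn /= subSnn subnn.
- have : (j == (size u).+1) || ((size u).+1 < j)%N by rewrite eq_sym -leq_eqVlt.
  case/orP => [/eqP->|lt2].
    by rewrite eqxx ltnn subnn subSnn.
  rewrite (gtn_eqF lt2).
  have -> : (j - size u = (j - (size u).+2).+2)%N by lia.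
  by [].
- by rewrite (ltn_eqF (leqW lt)).
Qed.

Lemma dec_seq (s : seq K) k : (1 <= k < size s)%N ->
  exists u x y w, s = u ++ x :: y :: w /\ k = (size u).+1.
Proof.
case/andP => k1 ks.
exists (take k.-1 s), (nth 0 s k.-1), (nth 0 s k), (drop k.+1 s); split.
  have h1 : (k.-1 < size s)%N by lia.
  by rewrite -{1}(cat_take_drop k.-1 s) (drop_nth 0 h1) prednK // (drop_nth 0 ks).
rewrite size_takel; [by rewrite prednK|lia].
Qed.

Lemma eps1_cons (x : K) (w : seq K) : eps1_seq (x :: w) = x^-1 :: w.
Proof.
apply: (@eq_from_nth _ 0); first by rewrite /eps1_seq size_mkseq.
rewrite /eps1_seq size_mkseq => j lt_j; rewrite nth_mkseq //.
by case: j {lt_j}.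
Qed.

Lemma ival_S (s : seq K) k : ival s k.+1 = nth 0 s k.
Proof.
rewrite /ival ltz_nat /=. by rewrite subn1.
Qed.

Lemma ival_0 (s : seq K) : ival s 0 = (nth 0 s 0)^-1.
Proof. by []. Qed.

End Comb.

Definition par (z : int) : bool := ~~ (2 %| z)%Z.
Lemma parD x y : par (x + y) = par x (+) par y.
Proof.
rewrite /par.
have -> : (2 %| x + y)%Z = ((2 %| x)%Z == (2 %| y)%Z) by apply/idP/eqP; lia.
by case: (2 %| x)%Z; case: (2 %| y)%Z.
Qed.
Lemma par_nat (k : nat) : par k%:Z = odd k.
Proof. by rewrite /par dvdzE /= dvdn2 negbK. Qed.
Lemma par_m2 : par (-2) = false. Proof. by []. Qed.
Lemma par_2 : par 2 = false. Proof. by []. Qed.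
Lemma par_0 : par 0 = false. Proof. by []. Qed.

Section Eps.
Variables (K : fieldType) (p q : K).
Definition eps (s : seq K) : bool := odd (ee p q s).

Lemma hinv (x y : K) : x != 0 -> y != 0 -> hh p x^-1 y = hh p y^-1 x.
Proof.
move=> x0 y0; rewrite /hh; congr nat_of_bool.
apply/eqP/eqP => H.
- have e : p ^+ 2 * x = (p ^+ 2 * y) * x / y by field.
  by rewrite e -H mulVf // mul1r.
- have e : p ^+ 2 * y = (p ^+ 2 * x) * y / x by field.
  by rewrite e -H mulVf // mul1r.
Qed.

Lemma eps_swap (s : seq K) k : all (fun z => z != 0) s -> (1 <= k < size s)%N ->
  eps (swap_seq s k) = eps s (+) par (mdot p (ival s k) (ival s k.+1)).
Proof.
move=> nz Hk; case: (dec_seq Hk) => u [x [y [w [Es Ek]]]]; subst s k.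
rewrite swap_gen !ival_S nth_cat ltnn subnn nth_cat ltnNge leqnSn /= subSnn /=.
move: nz; rewrite all_cat /= => /and4P [_ x0 y0 _].
rewrite /mdot; case: eqP => [<-|_]; first by rewrite par_m2 addbF.
have H := ee_swap p q u w x y.
rewrite /Gf (hinv x0 y0) in H.
move: (congr1 odd H); rewrite !oddD par_nat oddD /eps.
by case: (odd (ee _ _ _)); case: (odd (ee _ _ _)); case: (odd (hh _ _ _)); case: (odd (hh _ _ _)); case: (odd (hh _ _ _)).
Qed.

Lemma eps_eps1 (s : seq K) : (0 < size s)%N ->
  eps (eps1_seq s) = eps s (+) par (lam q (ival s 0) + lam q (ival s 1))%:Z.
Proof.
case: s => [//|x w] _.
rewrite eps1_cons ival_0 (ival_S _ 0) /= /eps /=.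
have -> : \sum_(y <- w) Gf p x^-1 y = \sum_(y <- w) Gf p x y.
  by apply: eq_bigr => t _; rewrite /Gf invrK addnC.
rewrite par_nat !oddD.
by case: (odd (lam _ _)); case: (odd (lam _ _)); case: (odd (\sum_(_ <- _) _)%N); case: (odd (ee _ _ _)).
Qed.

End Eps.

Section Mat.
Variables (K : fieldType) (n : nat) (deg : 'I_n -> int).

Definition Dp (e : bool) : 'M[K]_n := diag_mx (\row_a ((par (deg a) == e)%:R)).

Lemma homogD (A : 'M[K]_n) d e : homog deg A d -> A *m Dp e = Dp (e (+) par d) *m A.
Proof.
move=> H; apply/matrixP => a b; rewrite mul_mx_diag mul_diag_mx !mxE.
case: (eqVneq (A a b) 0) => [->|nz]; first by rewrite mulr0 mul0r.
rewrite (H a b nz) parD mulrC.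
by case: (par (deg b)); case: e; case: (par d).
Qed.

Lemma homog0C (A : 'M[K]_n) (g : int -> K) : homog deg A 0 ->
  A *m diag_mx (\row_a g (deg a)) = diag_mx (\row_a g (deg a)) *m A.
Proof.
move=> H; apply/matrixP => a b; rewrite mul_mx_diag mul_diag_mx !mxE.
case: (eqVneq (A a b) 0) => [->|nz]; first by rewrite mulr0 mul0r.
by rewrite (H a b nz) addr0 mulrC.
Qed.

Lemma homogM (A B : 'M[K]_n) d1 d2 : homog deg A d1 -> homog deg B d2 ->
  homog deg (A *m B) (d1 + d2).
Proof.
move=> HA HB a b; rewrite mxE => nz.
have [c /andP [c1 c2]] : exists c, (A a c != 0) && (B c b != 0).
  apply/existsP; apply: contraNT nz; rewrite negb_exists => /forallP H.
  apply/eqP; apply: big1 => c _.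
  by move: (H c); rewrite negb_and !negbK => /orP [] /eqP ->; rewrite ?mul0r ?mulr0.
rewrite (HA _ _ c1) (HB _ _ c2); ring.
Qed.

Lemma homog_add (A B : 'M[K]_n) d : homog deg A d -> homog deg B d -> homog deg (A + B) d.
Proof.
move=> HA HB a b; rewrite mxE => nz.
case: (eqVneq (A a b) 0) => [z|nzA]; last exact: HA.
apply: HB; by move: nz; rewrite z add0r.
Qed.

Lemma homog_zero d : homog deg (0 : 'M[K]_n) d.
Proof. by move=> a b; rewrite mxE eqxx. Qed.

Lemma homog_diag (g : int -> K) : homog deg (diag_mx (\row_a g (deg a))) 0.
Proof.
move=> a b; rewrite !mxE; case: (eqVneq a b) => [->|ne]; first by rewrite addr0.
by rewrite mulr0n eqxx.
Qed.

Lemma homog_sum I0 (r : seq I0) (P0 : pred I0) (F : I0 -> 'M[K]_n) d :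
  (forall i, P0 i -> homog deg (F i) d) -> homog deg (\sum_(i <- r | P0 i) F i) d.
Proof.
move=> H; elim/big_ind: _ => [|x y|i Pi]; [exact: homog_zero|exact: homog_add|exact: H].
Qed.

End Mat.

Section PiSec.
Variables (K : fieldType) (I : pred K) (m n : nat) (deg : 'I_n -> int)
  (E : seq K -> 'M[K]_n) (Sq : seq (seq K)) (eps : seq K -> bool).
Hypothesis HEE : forall i i', valid_seq I m i -> valid_seq I m i' ->
     E i *m E i' = if i == i' then E i else 0.
Hypothesis HSqv : all (valid_seq I m) Sq.
Hypothesis HSqu : uniq Sq.
Hypothesis HSq1 : \sum_(i <- Sq) E i = 1%:M.
Hypothesis HSq0 : forall i, valid_seq I m i -> i \notin Sq -> E i = 0.
Hypothesis HgE : forall i, valid_seq I m i -> homog deg (E i) 0.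

Definition Pi := \sum_(j <- Sq) E j *m Dp K deg (eps j).

Lemma EDp j e : valid_seq I m j -> E j *m Dp K deg e = Dp K deg e *m E j.
Proof. by move=> vj; rewrite (homogD _ (HgE vj)) par_0 addbF. Qed.

Lemma PiE j : valid_seq I m j -> Pi *m E j = Dp K deg (eps j) *m E j.
Proof.
move=> vj; case: (boolP (j \in Sq)) => jS; last by rewrite HSq0 // !mulmx0.
rewrite /Pi mulmx_suml (bigD1_seq j) //= big1_seq ?addr0.
  by rewrite EDp // -mulmxA HEE // eqxx.
move=> j' /andP [ne j'S]; have vj' := allP HSqv j' j'S.
by rewrite EDp // -mulmxA HEE // (negPf ne) mulmx0.
Qed.

Lemma Pi_comm (A : 'M[K]_n) (f : seq K -> seq K) (d : seq K -> int) :
  (forall i, i \in Sq -> valid_seq I m (f i)) ->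
  (forall i, i \in Sq -> A *m E i = E (f i) *m A) ->
  (forall i, i \in Sq -> homog deg (A *m E i) (d i)) ->
  (forall i, i \in Sq -> eps (f i) = eps i (+) par (d i)) ->
  A *m Pi = Pi *m A.
Proof.
move=> Hf HA Hd He.
transitivity (\sum_(i <- Sq) A *m (E i *m Dp K deg (eps i))).
  by rewrite /Pi mulmx_sumr.
transitivity (\sum_(i <- Sq) Pi *m A *m E i); last first.
  by rewrite -mulmx_sumr HSq1 mulmx1.
apply: eq_big_seq => i iS.
rewrite mulmxA (homogD _ (Hd i iS)) -(He i iS) (HA i iS).
by rewrite -[Pi *m A *m E i]mulmxA (HA i iS) [RHS]mulmxA (PiE (Hf i iS)) mulmxA.
Qed.

Lemma Pi_homog : homog deg Pi 0.
Proof.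
rewrite /Pi big_seq; apply: homog_sum => j jS.
have := homogM (HgE (allP HSqv j jS)) (@homog_diag K n deg (fun z => (par z == eps j)%:R : K)).
by rewrite addr0.
Qed.

Lemma Pi_stab (A : 'M[K]_n) : A *m Pi = Pi *m A -> stab Pi^T A.
Proof. by move=> H; rewrite /stab -trmx_mul H trmx_mul submxMl. Qed.

End PiSec.

Section G.
Variables (K : fieldType) (n : nat) (deg : 'I_n -> int).

Lemma Dmx_sum : [pchar K] =i pred0 ->
  \sum_(a < n) (#|[pred b | deg b == deg a]|%:R)^-1 *: Dmx K deg (deg a) = 1%:M :> 'M[K]_n.
Proof.
move=> Hc; apply/matrixP => a b; rewrite summxE !mxE.
case: (eqVneq a b) => [<-|ne]; last first.
  by rewrite big1 ?mulr0n // => x _; rewrite !mxE (negPf ne) mulr0n mulr0.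
transitivity (\sum_(x | deg x == deg a) (#|[pred b | deg b == deg a]|%:R)^-1 : K).
  rewrite [RHS]big_mkcond; apply: eq_bigr => x _; rewrite !mxE eqxx mulr1n.
  case: (eqVneq (deg x) (deg a)) => [e|ne'].
    rewrite mulr1; congr (_^-1); congr _%:R; apply: eq_card => y.
    by rewrite !inE e.
  by rewrite mulr0.
rewrite sumr_const.
set c := #|[pred b0 | deg b0 == deg a]|.
have h : forall x : K, x *+ c = x * c%:R by move=> x; rewrite mulr_natr.
rewrite h mulVf //.
move/pcharf0P: Hc => ->; rewrite -lt0n; apply/card_gt0P; exists a; by rewrite inE.
Qed.

Lemma graded (W : 'M[K]_n) : [pchar K] =i pred0 ->
  (forall d, (W *m Dmx K deg d <= W)%MS) -> graded_subspace deg W.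
Proof.
move=> Hc H; rewrite /graded_subspace.
rewrite -[W in (W <= _)%MS]mulmx1 -(Dmx_sum Hc) mulmx_sumr.
apply: summx_sub => a _; rewrite -scalemxAr; apply: scalemx_sub.
by apply: (sumsmx_sup a) => //; rewrite sub_capmx H submxMl.
Qed.

Lemma zero_part (Ei : 'M[K]_n) e : Ei *m Ei = Ei ->
  Dp K deg e *m Ei = 0 -> forall d, par d = e -> gdim_coef deg Ei d = 0%N.
Proof.
move=> EE H d pd; rewrite /gdim_coef.
set C := (Ei^T :&: Dmx K deg d)%MS.
have C1 : C *m Ei^T = C.
  have hC : C *m pinvmx Ei^T *m Ei^T = C := mulmxKpV (capmxSl _ _).
  by rewrite -{1}hC -mulmxA -trmx_mul EE hC.
have C2 : C *m Dmx K deg d = C.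
  have hC : C *m pinvmx (Dmx K deg d) *m (Dmx K deg d) = C := mulmxKpV (capmxSr _ _).
  have DD : Dmx K deg d *m Dmx K deg d = Dmx K deg d.
    rewrite mulmx_diag; congr diag_mx; apply/rowP => a; rewrite !mxE.
    by case: (deg a == d); rewrite ?mulr1 ?mul0r.
  by rewrite -{1}hC -mulmxA DD hC.
have C3 : C *m Dp K deg e = C.
  have DD : Dmx K deg d *m Dp K deg e = Dmx K deg d.
    rewrite mulmx_diag; congr diag_mx; apply/rowP => a; rewrite !mxE.
    case: eqP => [->|]; by rewrite ?pd ?eqxx ?mulr1 ?mul0r.
  by rewrite -{1}C2 -mulmxA DD C2.
have -> : C = 0.
  by rewrite -C3 -{1}C1 -mulmxA -[Dp K deg e]tr_diag_mx -trmx_mul H trmx0 mulmx0.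
exact: mxrank0.
Qed.

End G.

Theorem lemma8p28 (K : closedFieldType) (p q : K) (I : pred K) (m n : nat)
  (deg : 'I_n -> int) (E : seq K -> 'M[K]_n) (X S : nat -> 'M[K]_n)
  (P : 'M[K]_n) :
  theta_params p q I ->
  is_thetaR_gmod p q I m deg E X S P ->
  irreducible_gmod I m deg E X S P ->
  forall i : seq K, valid_seq I m i ->
    in_vZv2 (gdim_coef deg (E i)) \/ in_Zv2 (gdim_coef deg (E i)).
Proof.
move=> [Hc [p0 [q0 [p1 [pm1 [Inz [I1 [Im1 Iclos]]]]]]]] Hmod [n0 Hirr] i vi.
case: Hmod => HEE [[Sq [HSqv [HSqu [HSq1 HSq0]]]] [HSE [HXE [HPE [HXX [HPX
  [HS2 [HP2 [HSS [HPS [HSP [Hbr [HSX [HgE [HgX [HgS HgP]]]]]]]]]]]]]]]].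
pose ep := eps p q.
pose Pm := Pi deg E Sq ep.
have vnz : forall s, valid_seq I m s -> all (fun z => z != 0) s.
  move=> s /andP [_ /allP Hs]; apply/allP => z zs; exact: Inz (Hs z zs).
have vsize : forall s, valid_seq I m s -> size s = m.
  by move=> s /andP [/eqP].
have vswap : forall s k, valid_seq I m s -> (1 <= k < m)%N -> valid_seq I m (swap_seq s k).
  move=> s k vs hk; have hk' : (1 <= k < size s)%N by rewrite vsize.
  case: (dec_seq hk') => u [x [y [w [Es Ek]]]]; subst k.
  move: vs; rewrite Es swap_gen /valid_seq !size_cat !all_cat /=.
  by move=> /andP [hs /andP [hu /and3P [hx hy hw]]]; rewrite hs hu hx hy hw.
have veps1 : forall s, valid_seq I m s -> (1 <= m)%N -> valid_seq I m (eps1_seq s).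
  move=> s vs hm; have := vsize s vs; case: s vs => [|x w] vs hs; first by rewrite -hs in hm.
  move: vs; rewrite eps1_cons /valid_seq /= => /andP [-> /andP [Ix ->]].
  by rewrite (Iclos x Ix).2.2.
have PiE' : forall j, valid_seq I m j -> Pm *m E j = Dp K deg (ep j) *m E j.
  by move=> j vj; apply: (PiE ep HEE HSqv HSqu HSq0 HgE vj).
have comm := Pi_comm (eps := ep) HEE HSqv HSqu HSq1 HSq0 HgE.
have PH : homog deg Pm 0 := Pi_homog HSqv HgE.
have cE : forall j, valid_seq I m j -> E j *m Pm = Pm *m E j.
  move=> j vj; apply: (comm _ id (fun _ => 0)).
  - by move=> s sS; exact: allP HSqv s sS.
  - move=> s sS; have vs := allP HSqv s sS.
    by rewrite !HEE // eq_sym; case: eqP => // ->.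
  - move=> s sS; have vs := allP HSqv s sS.
    rewrite HEE //; case: eqP => _; [exact: HgE|exact: homog_zero].
  - by move=> s _; rewrite par_0 addbF.
have cX : forall l, (1 <= l <= m)%N -> X l *m Pm = Pm *m X l.
  move=> l hl; apply: (comm _ id (fun _ => 2)).
  - by move=> s sS; exact: allP HSqv s sS.
  - move=> s sS; exact: HXE (allP HSqv s sS) hl.
  - move=> s sS; have := homogM (HgX l hl) (HgE s (allP HSqv s sS)).
    by rewrite addr0.
  - by move=> s _; rewrite par_2 addbF.
have cS : forall k, (1 <= k < m)%N -> S k *m Pm = Pm *m S k.
  move=> k hk; refine (@comm (S k) (fun s => swap_seq s k) (fun s => mdot p (ival s k) (ival s k.+1)) _ _ _ _).
  - move=> s sS; exact: vswap (allP HSqv s sS) hk.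
  - move=> s sS; exact: HSE (allP HSqv s sS) hk.
  - move=> s sS; exact: HgS (allP HSqv s sS) hk.
  - move=> s sS; have vs := allP HSqv s sS.
    by apply: eps_swap; [exact: vnz|rewrite vsize].
have cP : (1 <= m)%N -> P *m Pm = Pm *m P.
  move=> hm; refine (@comm P (@eps1_seq K) (fun s => (lam q (ival s 0) + lam q (ival s 1))%:Z) _ _ _ _).
  - move=> s sS; exact: veps1 (allP HSqv s sS) hm.
  - move=> s sS; exact: HPE (allP HSqv s sS) hm.
  - move=> s sS; exact: HgP (allP HSqv s sS) hm.
  - move=> s sS; have vs := allP HSqv s sS.
    by apply: eps_eps1; rewrite vsize.
have Hgr : graded_subspace deg Pm^T.
  apply: graded => // d.
  rewrite /Dmx -[X in _ *m X]tr_diag_mx -trmx_mul.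
  rewrite -(@homog0C K n deg Pm (fun z => (z == d)%:R) PH) trmx_mul.
  exact: submxMl.
have EEi : E i *m E i = E i by rewrite HEE // eqxx.
have fin : forall e, Dp K deg e *m E i = 0 ->
    in_vZv2 (gdim_coef deg (E i)) \/ in_Zv2 (gdim_coef deg (E i)).
  move=> e He; case: e He => He; [right|left] => d hd; apply: (zero_part EEi He).
    exact: hd.
  by rewrite /par hd.
case: (boolP (i \in Sq)) => iS; last first.
  by apply: (fin true); rewrite HSq0 // mulmx0.
have := Hirr Pm^T Hgr (fun j vj => Pi_stab (cE j vj)) (fun l hl => Pi_stab (cX l hl))
  (fun k hk => Pi_stab (cS k hk)) (fun hm => Pi_stab (cP hm)).
case/orP => [H0|Hfull].
  apply: (fin (ep i)); rewrite -PiE' //.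
  move/andP: H0 => [H0 _]; rewrite submx0 in H0.
  have -> : Pm = 0 by rewrite -[Pm]trmxK (eqP H0) trmx0.
  by rewrite mul0mx.
apply: (fin (~~ ep i)).
have Hu : Pm \in unitmx by rewrite -unitmx_tr -row_full_unit.
have DD : Dp K deg (~~ ep i) *m Dp K deg (ep i) = 0.
  apply/matrixP => a b; rewrite mulmx_diag !mxE.
  by case: (par (deg a)); case: (ep i); rewrite ?mulr0 ?mul0r ?mul0rn.
by rewrite -[LHS](mulmxK Hu) -[Dp _ _ _ *m E i *m Pm]mulmxA cE // PiE' // mulmxA DD !mul0mx.
Qed.
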